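(* Let $X,Y$ be finite nonempty sets, $A\in\{0,1\}^{X\times Y}$, $\delta,\epsilon>0$, integers $k,\ell\ge1$, and let $\mathcal S,\mathcal T$ be $(\epsilon,\delta)$-oblivious samplers of $X$ and $Y$, respectively. Then $$\Big|\|A\|_{U(k,\ell)}^{k\ell}-\mathbb{E}_{S\in\mathcal S,\,T\in\mathcal T}\|A[S,T]\|_{U(k,\ell)}^{k\ell}\Big|\le 2\epsilon k+2\epsilon\ell+2\delta.$$
   Context: An $(\epsilon,\delta)$-oblivious sampler of a finite set $X$ is a finite nonempty family $\mathcal S$ of nonempty subsets $S\subseteq X$ such that for every function $f:X\to[0,1]$, $\Pr_{S\in\mathcal S}\big[|\mathbb{E}_{x\in X}f(x)-\mathbb{E}_{x\in S}f(x)|\le\epsilon\big]\ge1-\delta$, where $S$ is uniform over $\mathcal S$ and $\mathbb E_{x\in S}$ is the uniform average over $S$. $A[S,T]$ is the submatrix with rows $S$ and columns $T$. The $(k,\ell)$-grid norm of $M\in\mathbb{R}_{\ge0}^{X'\times Y'}$ is $\|M\|_{U(k,\ell)}=\big(\mathbb{E}_{x_1,\dots,x_k\in X',\,y_1,\dots,y_\ell\in Y'}\prod_{i,j}M(x_i,y_j)\big)^{1/(k\ell)}$. *)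

(* Defs.v *)
From mathcomp Require Import all_boot all_order all_algebra.
From mathcomp Require Import reals.
Set Implicit Arguments. Unset Strict Implicit. Unset Printing Implicit Defensive.
Import Order.TTheory GRing.Theory Num.Theory.
Local Open Scope ring_scope.

Definition avg (R : realType) (X : finType) (S : {set X}) (f : X -> R) : R :=
  (\sum_(x in S) f x) / #|S|%:R.

(* An (eps,delta)-oblivious sampler of X: a finite nonempty family (indexed by
   a finType I, repetitions allowed, uniform over I) of nonempty subsets. *)
Definition oblivious_sampler (R : realType) (X I : finType)
    (eps delta : R) (S : I -> {set X}) : Prop :=
  [/\ (0 < #|I|)%N,
      (forall i, S i != set0) &
      forall f : X -> R, (forall x, 0 <= f x <= 1) ->
        1 - delta <=
        #|[set i | `|avg [set: X] f - avg (S i) f| <= eps]|%:R / #|I|%:R ].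

(* ||A[S,T]||_{U(k,l)}^{k l}: the expectation over x_1..x_k in S and
   y_1..y_l in T of prod_{i,j} A(x_i,y_j), for a 0/1 matrix A. *)
Definition grid_pow (R : realType) (X Y : finType) (A : X -> Y -> bool)
    (k l : nat) (S : {set X}) (T : {set Y}) : R :=
  (\sum_(x : {ffun 'I_k -> X} | [forall i, x i \in S])
     \sum_(y : {ffun 'I_l -> Y} | [forall j, y j \in T])
        \prod_(i < k) \prod_(j < l) ((A (x i) (y j))%:R : R))
  / (#|S| ^ k * #|T| ^ l)%:R.

(* Main.v *)
Require Import Defs.
From mathcomp Require Import all_boot all_order all_algebra.
From mathcomp Require Import reals ring lra.
Import Order.TTheory GRing.Theory Num.Theory.
Local Open Scope ring_scope.

Lemma sum_ffun_prod (R : realType) (X : finType) (k : nat) (S : {set X}) (H : X -> R) :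
  \sum_(x : {ffun 'I_k -> X} | [forall i, x i \in S]) \prod_(i < k) H (x i)
  = (\sum_(x in S) H x) ^+ k.
Proof.
have -> : (\sum_(x in S) H x) ^+ k = \prod_(i < k) \sum_(x in S) H x.
  by rewrite prodr_const card_ord.
rewrite [RHS](eq_bigr (fun _ => \sum_x (if x \in S then H x else 0))); last first.
  by move=> i _; rewrite big_mkcond.
rewrite bigA_distr_bigA big_mkcond /=; apply: eq_bigr => f _.
case: (boolP [forall i, f i \in S]) => [/forallP allS | /forallPn [i /negbTE ni]]; last first.
  by rewrite (bigD1 i) //= ni mul0r.
by apply: eq_bigr => i _; rewrite allS.
Qed.

Lemma powdiff (R : realType) (a b : R) (n : nat) :
  0 <= a <= 1 -> 0 <= b <= 1 -> `|a ^+ n - b ^+ n| <= n%:R * `|a - b|.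
Proof.
move=> /andP[a0 a1] /andP[b0 b1].
elim: n => [|n IH]; first by rewrite !expr0 subrr normr0 mul0r.
have -> : a ^+ n.+1 - b ^+ n.+1 = a * (a ^+ n - b ^+ n) + (a - b) * b ^+ n.
  by rewrite !exprS; ring.
apply: (le_trans (ler_normD _ _)).
rewrite !normrM (ger0_norm a0) (ger0_norm (exprn_ge0 n b0)) -natr1 mulrDl mul1r.
apply: lerD.
  apply: le_trans (IH); rewrite ler_piMl //.
rewrite ler_piMr // exprn_ile1 //.
Qed.

Lemma avg01 (R : realType) (X : finType) (S : {set X}) (f : X -> R) :
  (forall x, 0 <= f x <= 1) -> 0 <= avg S f <= 1.
Proof.
move=> f01; rewrite /avg.
have s0 : 0 <= \sum_(x in S) f x by apply: sumr_ge0 => x _; case/andP: (f01 x).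
have s1 : \sum_(x in S) f x <= #|S|%:R.
  rewrite -sum1_card natr_sum; apply: ler_sum => x _; by case/andP: (f01 x).
case: (posnP #|S|) => [-> | Sp].
  by rewrite invr0 mulr0 lexx ler01.
rewrite divr_ge0 //= ler_pdivrMr ?ltr0n // mul1r //.
Qed.

Lemma grid_formula (R : realType) (X Y : finType) (A : X -> Y -> bool)
    (k l : nat) (S : {set X}) (T : {set Y}) :
  grid_pow R A k l S T =
  (\sum_(y : {ffun 'I_l -> Y} | [forall j, y j \in T])
      (avg S (fun x => \prod_(j < l) ((A x (y j))%:R : R))) ^+ k)
  / (#|T| ^ l)%:R.
Proof.
rewrite /grid_pow exchange_big /=.
under eq_bigr => y _ do
  rewrite (@sum_ffun_prod R X k S (fun x => \prod_(j < l) ((A x (y j))%:R : R))).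
rewrite natrM invfM mulrA; congr (_ * _).
rewrite mulr_suml; apply: eq_bigr => y _.
by rewrite /avg expr_div_n natrX.
Qed.

Lemma pointwise (R : realType) (X I : finType) (eps delta : R)
    (S : I -> {set X}) (k : nat) (f : X -> R) :
  oblivious_sampler eps delta S -> (forall x, 0 <= f x <= 1) -> 0 <= eps ->
  `|avg [set: X] f ^+ k - (\sum_i avg (S i) f ^+ k) / #|I|%:R|
    <= k%:R * eps + delta.
Proof.
case=> Ip _ samp f01 e0.
set a := avg [set: X] f.
have a01 := @avg01 _ _ [set: X] f f01.
have b01 i := @avg01 _ _ (S i) f f01.
set G := [set i | `|a - avg (S i) f| <= eps].
have hG := samp f f01; rewrite -/a -/G in hG.
have np : (0 < #|I|%:R :> R) by rewrite ltr0n.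
have -> : a ^+ k - (\sum_i avg (S i) f ^+ k) / #|I|%:R
    = (\sum_i (a ^+ k - avg (S i) f ^+ k)) / #|I|%:R.
  rewrite sumrB sumr_const mulrBl; congr (_ - _).
  by rewrite -[a ^+ k *+ _]mulr_natr -mulrA mulfV ?mulr1 // gt_eqF.
rewrite normrM (gtr0_norm (_ : 0 < #|I|%:R^-1)) ?invr_gt0 // mulrC ler_pdivrMl //.
apply: (le_trans (ler_norm_sum _ _ _)).
rewrite (bigID (fun i => i \in G)) /=.
have h1 : \sum_(i | i \in G) `|a ^+ k - avg (S i) f ^+ k| <= #|G|%:R * (k%:R * eps).
  rewrite -sum1_card natr_sum mulr_suml; apply: ler_sum => i.
  rewrite inE => Hi; rewrite mul1r.
  apply: (le_trans (@powdiff _ _ _ k a01 (b01 i))).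
  by rewrite ler_wpM2l.
have h2 : \sum_(i | i \notin G) `|a ^+ k - avg (S i) f ^+ k| <= #|~: G|%:R.
  rewrite (eq_bigl (fun i => i \in ~: G)); last by move=> i; rewrite in_setC.
  rewrite -sum1_card natr_sum; apply: ler_sum => i _.
  have /andP[x0 x1] := a01; have /andP[y0 y1] := b01 i.
  have := exprn_ge0 k x0; have := exprn_ile1 k x0 x1.
  have := exprn_ge0 k y0; have := exprn_ile1 k y0 y1.
  move: (a ^+ k) (avg (S i) f ^+ k) => u v *.
  rewrite ler_norml; apply/andP; split; lra.
have cG : #|~: G|%:R = #|I|%:R - #|G|%:R :> R.
  by rewrite cardsCs setCK -cardsT natrB ?subset_leq_card ?subsetT // cardsT.
have hG' : #|I|%:R - #|G|%:R <= delta * #|I|%:R.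
  by move: hG; rewrite ler_pdivlMr // mulrBl mul1r; lra.
have GI : #|G|%:R <= #|I|%:R :> R by rewrite ler_nat max_card.
have ke : 0 <= k%:R * eps by rewrite mulr_ge0.
have : #|G|%:R * (k%:R * eps) <= #|I|%:R * (k%:R * eps) by rewrite ler_wpM2r.
rewrite cG in h2; nra.
Qed.

Lemma count_ffun (R : realType) (Y : finType) (l : nat) (T : {set Y}) :
  \sum_(y : {ffun 'I_l -> Y} | [forall j, y j \in T]) (1:R) = (#|T| ^ l)%:R.
Proof.
rewrite natrX -sum1_card natr_sum -(@sum_ffun_prod R Y l T (fun _ => 1)).
by apply: eq_bigr => y _; rewrite big1.
Qed.

Lemma L1 (R : realType) (X Y I : finType) (A : X -> Y -> bool) (eps delta : R)
    (k l : nat) (S : I -> {set X}) (T : {set Y}) :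
  oblivious_sampler eps delta S -> 0 <= eps -> 0 <= delta ->
  `|grid_pow R A k l [set: X] T - (\sum_i grid_pow R A k l (S i) T) / #|I|%:R|
    <= k%:R * eps + delta.
Proof.
move=> samp e0 d0.
have Ip : (0 < #|I|)%N by case: samp.
under eq_bigr => i _ do rewrite grid_formula.
rewrite grid_formula.
set h := fun (y : {ffun 'I_l -> Y}) x => \prod_(j < l) ((A x (y j))%:R : R).
have h01 y x : 0 <= h y x <= 1.
  rewrite /h prodr_ge0 ?prodr_ile1 // => j _; case: (A x (y j)) => //=; by rewrite ler01 lexx.
set N := (#|T| ^ l)%:R : R.
set P := fun y : {ffun 'I_l -> Y} => [forall j, y j \in T].
have -> : (\sum_(y | P y) avg [set: X] (h y) ^+ k) / N
     - (\sum_i (\sum_(y | P y) avg (S i) (h y) ^+ k) / N) / #|I|%:R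
   = (\sum_(y | P y) (avg [set: X] (h y) ^+ k
        - (\sum_i avg (S i) (h y) ^+ k) / #|I|%:R)) / N.
  rewrite sumrB mulrBl; congr (_ - _).
  by rewrite -!mulr_suml exchange_big /= mulrAC.
have c0 : 0 <= k%:R * eps + delta by rewrite addr_ge0 ?mulr_ge0.
case: (posnP (#|T| ^ l)) => [N0 | Np].
  by rewrite /N N0 invr0 mulr0 normr0.
have Npos : 0 < N by rewrite ltr0n.
rewrite normrM (gtr0_norm (_ : 0 < N^-1)) ?invr_gt0 // mulrC ler_pdivrMl //.
apply: (le_trans (ler_norm_sum _ _ _)).
rewrite /N -count_ffun mulr_suml; apply: ler_sum => y _.
rewrite mul1r; exact: pointwise samp (h01 y) e0.
Qed.

Lemma grid_transpose (R : realType) (X Y : finType) (A : X -> Y -> bool)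
    (k l : nat) (S : {set X}) (T : {set Y}) :
  grid_pow R A k l S T = grid_pow R (fun y x => A x y) l k T S.
Proof.
rewrite /grid_pow exchange_big mulnC; congr (_ / _).
apply: eq_bigr => y _; apply: eq_bigr => x _; exact: exchange_big.
Qed.

Theorem lemma4p7 (R : realType) (X Y I J : finType)
    (A : X -> Y -> bool) (delta eps : R) (k l : nat)
    (S : I -> {set X}) (T : J -> {set Y}) :
  (0 < #|X|)%N -> (0 < #|Y|)%N ->
  0 < delta -> 0 < eps -> (1 <= k)%N -> (1 <= l)%N ->
  oblivious_sampler eps delta S -> oblivious_sampler eps delta T ->
  `| grid_pow R A k l [set: X] [set: Y]
     - (\sum_(i : I) \sum_(j : J) grid_pow R A k l (S i) (T j))
       / (#|I| * #|J|)%:R |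
  <= 2 * eps * k%:R + 2 * eps * l%:R + 2 * delta.
Proof.
move=> _ _ d0 e0 _ _ sS sT.
have Ip : (0 < #|I|)%N by case: sS.
have Jp : (0 < #|J|)%N by case: sT.
set M := fun i => grid_pow R A k l (S i) [set: Y].
have h1 : `|grid_pow R A k l [set: X] [set: Y] - (\sum_i M i) / #|I|%:R|
    <= k%:R * eps + delta := @L1 R X Y I A eps delta k l S [set: Y] sS (ltW e0) (ltW d0).
have h2 i : `|M i - (\sum_j grid_pow R A k l (S i) (T j)) / #|J|%:R|
    <= l%:R * eps + delta.
  rewrite /M grid_transpose.
  under eq_bigr => j _ do rewrite grid_transpose.
  exact: (@L1 R Y X J _ eps delta l k T (S i) sT (ltW e0) (ltW d0)).
set G := grid_pow R A k l [set: X] [set: Y].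
have -> : G - (\sum_i \sum_j grid_pow R A k l (S i) (T j)) / (#|I| * #|J|)%:R
  = (G - (\sum_i M i) / #|I|%:R)
    + (\sum_i (M i - (\sum_j grid_pow R A k l (S i) (T j)) / #|J|%:R)) / #|I|%:R.
  rewrite sumrB -mulr_suml natrM invfM.
  set a := \sum_i M i; set b := \sum_i \sum_j _; ring.
apply: (le_trans (ler_normD _ _)).
have Ipos : (0 < #|I|%:R :> R) by rewrite ltr0n.
have h3 : `|(\sum_i (M i - (\sum_j grid_pow R A k l (S i) (T j)) / #|J|%:R))
            / #|I|%:R| <= l%:R * eps + delta.
  rewrite normrM (gtr0_norm (_ : 0 < #|I|%:R^-1)) ?invr_gt0 // mulrC ler_pdivrMl //.
  apply: (le_trans (ler_norm_sum _ _ _)).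
  apply: (le_trans (ler_sum _ (fun i _ => h2 i))).
  by rewrite sumr_const -[_ *+ _]mulr_natl.
have k0 : 0 <= k%:R * eps by rewrite mulr_ge0 // ltW.
have l0 : 0 <= l%:R * eps by rewrite mulr_ge0 // ltW.
have := lerD h1 h3.
have -> : 2 * eps * k%:R = k%:R * eps + k%:R * eps by ring.
have -> : 2 * eps * l%:R = l%:R * eps + l%:R * eps by ring.
lra.
Qed.
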